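(* Let $G$ be a simple graph on $[n]$ and let $G^*$ be its associated directed graph. Then $G$ is closed with respect to the given labeling if and only if for any two vertices $i\neq j$ of $G^*$, all paths of shortest length from $i$ to $j$ are directed.
   Context: $G$ is closed with respect to the given labeling if for all distinct edges $\{i,j\}$ and $\{k,l\}$ of $G$ with $i<j$ and $k<l$ one has $\{j,l\}\in E(G)$ whenever $i=k$, and $\{i,k\}\in E(G)$ whenever $j=l$. The associated directed graph $G^*$ has vertex set $[n]$ and an arrow $(i,j)$ whenever $\{i,j\}\in E(G)$ and $i<j$. A path from $v$ to $w$ is a sequence of vertices $v=v_0,v_1,\ldots,v_l=w$ such that each $\{v_k,v_{k+1}\}$ is an edge of the underlying graph; in $G^*$ such a path is called directed if either $(v_k,v_{k+1})$ is an arrow for all $k$, or $(v_{k+1},v_k)$ is an arrow for all $k$. *)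

(* Defs.v *)
From mathcomp Require Import all_boot.
Set Implicit Arguments. Unset Strict Implicit. Unset Printing Implicit Defensive.

(* A simple graph on [n] is represented on the vertex type 'I_n (vertices
   0,...,n-1, with the natural order playing the role of the labeling) by a
   symmetric irreflexive adjacency relation G. *)
Definition simple_graph (n : nat) (G : rel 'I_n) : Prop :=
  symmetric G /\ irreflexive G.

Definition closed_graph (n : nat) (G : rel 'I_n) : Prop :=
  forall i j k l : 'I_n, G i j -> G k l -> i < j -> k < l ->
    (i, j) <> (k, l) ->
    (i = k -> G j l) /\ (j = l -> G i k).

(* A path from v to w: the vertex sequence v :: p with consecutive vertices
   adjacent in G and last vertex w; its length is size p. *)
Definition is_path (n : nat) (G : rel 'I_n) (v w : 'I_n) (p : seq 'I_n) : Prop :=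
  path G v p /\ last v p = w.

Definition is_shortest_path (n : nat) (G : rel 'I_n) (v w : 'I_n) (p : seq 'I_n)
  : Prop :=
  is_path G v w p /\ forall q, is_path G v w q -> size p <= size q.

(* Directed in G^*: every step is an arrow (v_k, v_{k+1}), i.e. an edge with
   v_k < v_{k+1}, or every step is a reversed arrow (v_{k+1}, v_k). *)
Definition directed_path (n : nat) (G : rel 'I_n) (v : 'I_n) (p : seq 'I_n) : Prop :=
  path (fun a b => G a b && (a < b)) v p \/ path (fun a b => G a b && (b < a)) v p.

(* Main.v *)
Require Import Defs.
From mathcomp Require Import all_boot.

Lemma shortcut (n : nat) (G : rel 'I_n) : simple_graph G -> closed_graph G ->
  forall p v, path G v p -> directed_path G v p \/
    exists q, path G v q /\ last v q = last v p /\ size q < size p.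
Proof.
move=> [Gs Gi] Gc; elim=> [|x p IH] v /=.
  by move=> _; left; left.
move=> /andP[Gvx Gp].
have nvx : v != x by apply/eqP => E; subst; rewrite Gi in Gvx.
case: (IH x Gp) => [Hd|[q [Pq [Lq Sq]]]]; last first.
  by right; exists (x :: q); rewrite /= Gvx Pq Lq ltnS.
case: p Gp IH Hd => [|y p] Gp _ Hd.
  left; case: (ltngtP v x) => h; [left|right|by move: nvx; rewrite (val_inj h) eqxx].
    by rewrite /= Gvx h.
  by rewrite /= Gvx h.
move: Gp => /= /andP[Gxy Gp].
case: Hd => /= /andP[/andP[_ xy] Hd].
  case: (ltngtP v x) => h; last by move: nvx; rewrite (val_inj h) eqxx.
    by left; left; rewrite /= Gvx h Gxy xy.
  (* x < v, x < y *)
  right; have Gxv : G x v by rewrite Gs.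
  case: (eqVneq v y) => [E|nvy]; first subst y.
    by exists p; split => //; split => //=; rewrite !ltnS leqnSn.
  have [H1 _] := Gc x v x y Gxv Gxy h xy (fun E => (negP nvy) (introT eqP (congr1 snd E))).
  exists (y :: p); by rewrite /= (H1 erefl) Gp ltnS leqnn.
case: (ltngtP v x) => h; last by move: nvx; rewrite (val_inj h) eqxx.
  (* v < x, y < x *)
  right; have Gyx : G y x by rewrite Gs.
  case: (eqVneq v y) => [E|nvy]; first subst y.
    by exists p; split => //; split => //=; rewrite !ltnS leqnSn.
  have [_ H2] := Gc v x y x Gvx Gyx h xy (fun E => (negP nvy) (introT eqP (congr1 fst E))).
  exists (y :: p); by rewrite /= (H2 erefl) Gp ltnS leqnn.
by left; right; rewrite /= Gvx h Gxy xy.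
Qed.

Lemma two_shortest (n : nat) (G : rel 'I_n) (a b c : 'I_n) :
  G a b -> G b c -> a != c -> G a c = false -> is_shortest_path G a c [:: b; c].
Proof.
move=> Gab Gbc nac Gac; split; first by split => //=; rewrite Gab Gbc.
case=> [|x [|y q]] [] //=.
  by move=> _ E; move: nac; rewrite E eqxx.
by move=> /andP[Gax _] E; move: Gac; rewrite -E Gax.
Qed.

Theorem proposition1p4 (n : nat) (G : rel 'I_n) :
  simple_graph G ->
  (closed_graph G <->
   forall (i j : 'I_n) (p : seq 'I_n), i != j ->
     is_shortest_path G i j p -> directed_path G i p).
Proof.
move=> [Gs Gi]; split.
  move=> Gc i j p _ [[Pp Lp] Hmin].
  case: (@shortcut _ G (conj Gs Gi) Gc p i Pp) => // [[q [Pq [Lq Sq]]]].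
  have := Hmin q (conj Pq (etrans Lq Lp)).
  by rewrite leqNgt Sq.
move=> H i j k l Gij Gkl ij kl neq; split => E; subst.
  case Gjl: (G j l) => //.
  have njl : j != l by apply/eqP => E; apply: neq; rewrite E.
  have Gji : G j k by rewrite Gs.
  have := H j l [:: k; l] njl (@two_shortest _ G _ _ _ Gji Gkl njl Gjl).
  by case => /=; rewrite ?ltnNge ?(ltnW ij) ?(ltnW kl) ?andbF.
case Gik: (G i k) => //.
have nik : i != k by apply/eqP => E; apply: neq; rewrite E.
have Glk : G l k by rewrite Gs.
have := H i k [:: l; k] nik (@two_shortest _ G _ _ _ Gij Glk nik Gik).
by case => /=; rewrite ?ltnNge ?(ltnW ij) ?(ltnW kl) ?andbF.
Qed.
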